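(* $z_2(4,4)\ge 10$.
   Context: Double Zarankiewicz number: consider configurations $G=([m],[n],E_1\cup E_2)$ where $[m]=\{1,\dots,m\}$, $E_1\subseteq[m]\times[n]$ is a set of 1-edges (cells) and $E_2$ is a set of 2-edges $(i,j;k,l)$ with $i,k\in[m]$, $j,l\in[n]$, $i\ne k$, $j\ne l$; the cells $(i,j)$ and $(k,l)$ are the two halves of this 2-edge. Simplicity condition: the halves of all 2-edges are pairwise distinct cells and none of them belongs to $E_1$. A cell is occupied if it lies in $E_1$ or is a half of some 2-edge. $G$ contains a generalized $C_4$-cycle if (1) there are four 1-edges $(i,j),(i,l),(k,j),(k,l)\in E_1$ with $i\ne k$, $j\ne l$; or (2) there is a 2-edge $(i,j;k,l)\in E_2$ whose two opposite cells $(i,l)$ and $(k,j)$ are both occupied; or (3) there are a 2-edge $(i,j;p,q)\in E_2$ and a cell $(k,l)$ such that the five cells $(k,l),(k,j),(k,q),(i,l),(p,l)$ are pairwise distinct and all occupied. $z_2(m,n)$ is the maximum of $|E_1|+|E_2|$ over all such $G$ satisfying the simplicity condition and containing no generalized $C_4$-cycle. *)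

(* Defs.v *)
From mathcomp Require Import all_boot.
Set Implicit Arguments. Unset Strict Implicit. Unset Printing Implicit Defensive.

Definition cell (m n : nat) := ('I_m * 'I_n)%type.
(* A 2-edge (i,j;k,l) is represented as the ordered pair of its halves
   ((i,j),(k,l)). *)
Definition tedge (m n : nat) := (cell m n * cell m n)%type.

Section Config.
Variables (m n : nat) (E1 : {set cell m n}) (E2 : {set tedge m n}).

Definition two_edges_ok : bool :=
  [forall e in E2, (e.1.1 != e.2.1) && (e.1.2 != e.2.2)].

Definition half (e : tedge m n) (x : cell m n) : bool := (e.1 == x) || (e.2 == x).

(* Simplicity: the halves of all 2-edges are pairwise distinct cells
   (distinct 2-edges share no half; within a 2-edge the halves differ,
   which follows from two_edges_ok) and no half lies in E1. *)
Definition simple_config : bool :=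
  two_edges_ok &&
  [forall e in E2, forall f in E2, forall x, (half e x && half f x) ==> (e == f)] &&
  [forall e in E2, (e.1 \notin E1) && (e.2 \notin E1)].

Definition occupied (x : cell m n) : bool :=
  (x \in E1) || [exists e in E2, half e x].

Definition cycle1 : bool :=
  [exists i : 'I_m, exists k : 'I_m, exists j : 'I_n, exists l : 'I_n,
    [&& i != k, j != l, (i, j) \in E1, (i, l) \in E1, (k, j) \in E1 & (k, l) \in E1]].

Definition cycle2 : bool :=
  [exists e in E2, occupied (e.1.1, e.2.2) && occupied (e.2.1, e.1.2)].

Definition cycle3 : bool :=
  [exists e in E2, exists c : cell m n,
    let: ((i, j), (p, q)) := e in
    let: (k, l) := c in
    let s := [:: (k, l); (k, j); (k, q); (i, l); (p, l)] in
    uniq s && all occupied s].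

Definition has_gen_C4 : bool := [|| cycle1, cycle2 | cycle3].

Definition admissible : bool := simple_config && ~~ has_gen_C4.

End Config.

Definition z2 (m n : nat) : nat :=
  \max_(E1 : {set cell m n})
    \max_(E2 : {set tedge m n} | admissible E1 E2) (#|E1| + #|E2|).

(* Main.v *)
Require Import Defs.
From mathcomp Require Import all_boot.
From Stdlib Require Import FunctionalExtensionality.

Definition o0 : 'I_4 := @Ordinal 4 0 isT.
Definition o1 : 'I_4 := @Ordinal 4 1 isT.
Definition o2 : 'I_4 := @Ordinal 4 2 isT.
Definition o3 : 'I_4 := @Ordinal 4 3 isT.
Definition L4 : seq 'I_4 := [:: o0; o1; o2; o3].
Definition LC : seq (cell 4 4) := [seq (i, j) | i <- L4, j <- L4].
Definition LT : seq (tedge 4 4) := [seq (a, b) | a <- LC, b <- LC].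

Lemma L4P (i : 'I_4) : i \in L4.
Proof. by case: i => [[|[|[|[|m]]]] Hm]; rewrite ?(@val_inj _ _ _ _ _ _) //. Qed.

Lemma LCP (c : cell 4 4) : c \in LC.
Proof. case: c => i j; apply/allpairsP; exists (i, j); by rewrite !L4P. Qed.

Lemma LTP (e : tedge 4 4) : e \in LT.
Proof. case: e => a b; apply/allpairsP; exists (a, b); by rewrite !LCP. Qed.

Lemma quantE (T : finType) (L : seq T) : (forall x, x \in L) ->
  @FiniteQuant.quant0b T =
  fun Bp => ~~ has (fun x => let: FiniteQuant.Quantified F := Bp x x in F) L.
Proof.
move=> HL; apply: functional_extensionality => Bp.
rewrite /FiniteQuant.quant0b; apply/pred0P/hasPn => [H x _ | H x].
  by move: (H x) => /= ->.
by apply/negbTE/H.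
Qed.

Lemma allinE (T : finType) : @FiniteQuant.all_in T =
  fun C B x y => FiniteQuant.Quantified
    (if C then ~~ (let: FiniteQuant.Quantified F := B in F) else false).
Proof.
apply: functional_extensionality => C; apply: functional_extensionality => B.
do 2 (apply: functional_extensionality => ?).
by rewrite /FiniteQuant.all_in; case: C; case: B.
Qed.

Lemma exinE (T : finType) : @FiniteQuant.ex_in T =
  fun C B x y => FiniteQuant.Quantified
    (if C then (let: FiniteQuant.Quantified F := B in F) else false).
Proof.
apply: functional_extensionality => C; apply: functional_extensionality => B.
do 2 (apply: functional_extensionality => ?).
by rewrite /FiniteQuant.ex_in; case: C; case: B.
Qed.

Definition cc (i j : nat) : cell 4 4 := (nth o0 L4 i, nth o0 L4 j).

Definition s1 : seq (cell 4 4) :=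
  [:: cc 3 1; cc 1 1; cc 2 2; cc 3 0; cc 1 2; cc 3 3; cc 0 2; cc 2 0].
Definition s2 : seq (tedge 4 4) := [:: (cc 2 3, cc 0 0); (cc 1 3, cc 0 1)].
Definition myE1 : {set cell 4 4} := [set:: s1].
Definition myE2 : {set tedge 4 4} := [set:: s2].

Lemma memE1 : mem myE1 = mem s1.
Proof.
have H x : (x \in myE1) = (x \in s1) by rewrite /myE1 inE.
unfold mem; simpl; congr Mem; apply: functional_extensionality => x; exact: H.
Qed.

Lemma memE2 : mem myE2 = mem s2.
Proof.
have H x : (x \in myE2) = (x \in s2) by rewrite /myE2 inE.
unfold mem; simpl; congr Mem; apply: functional_extensionality => x; exact: H.
Qed.

Lemma my_adm : admissible myE1 myE2.
Proof.
rewrite /admissible /simple_config /two_edges_ok /has_gen_C4 /cycle1 /cycle2 /cycle3 /occupied.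
rewrite memE1 memE2.
rewrite (@quantE _ _ LTP) (@quantE _ _ LCP) (@quantE _ _ L4P) !allinE !exinE.
cbv beta.
vm_compute. reflexivity.
Qed.

Lemma my_card : #|myE1| + #|myE2| = 10.
Proof.
rewrite /myE1 /myE2 !cardsE.
have -> : #|s1| = size s1 by apply/card_uniqP; vm_compute.
have -> : #|s2| = size s2 by apply/card_uniqP; vm_compute.
by [].
Qed.

Theorem theorem3p1 : 10 <= z2 4 4.
Proof.
  rewrite /z2 -my_card.
  apply: leq_trans (leq_bigmax myE1).
  exact: (@leq_bigmax_cond _ (fun E2 => admissible myE1 E2) (fun E2 => #|myE1| + #|E2|) myE2 my_adm).
Qed.
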